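(* Let $\mathbf A$ be a finite algebra. If $\mathbf A$ has a nontrivial strongly abelian congruence, then $c^s_{\mathbf A}(n)\in 2^{\Omega(n^{1/k})}$ where $k=\lfloor\log_2|A|\rfloor$.
   Context: For a finite algebra $\mathbf A$, $c^s_{\mathbf A}(n)$ is the maximum number of surjective homomorphisms $\mathbf X\to\mathbf A$ over algebras $\mathbf X$ in the signature of $\mathbf A$ with at most $n$ elements. $\mathrm{Clo}_k(\mathbf A)$ is the set of $k$-ary term operations. A congruence $\alpha$ of $\mathbf A$ is strongly abelian if for every $k\ge1$, every $t\in\mathrm{Clo}_k(\mathbf A)$ and all $x_1,\dots,x_k,y_1,\dots,y_k,z_2,\dots,z_k\in A$ with $(x_i,y_i)\in\alpha$ for $1\le i\le k$ and $(y_i,z_i)\in\alpha$ for $2\le i\le k$, $t(x_1,\dots,x_k)=t(y_1,\dots,y_k)$ implies $t(x_1,z_2,\dots,z_k)=t(y_1,z_2,\dots,z_k)$. Nontrivial means different from the equality relation. *)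

(* Defs.v *)
From mathcomp Require Import all_boot.
From Stdlib Require Import ClassicalEpsilon.
From Stdlib Require Reals.

Set Implicit Arguments.
Unset Strict Implicit.
Unset Printing Implicit Defensive.

Record signature := Signature { symb : Type ; arity : symb -> nat }.

Definition ops (S : signature) (T : Type) : Type :=
  forall i : symb S, ('I_(arity i) -> T) -> T.

Definition decP (P : Prop) : bool :=
  if excluded_middle_informative P then true else false.

Definition is_hom (S : signature) (X Y : Type) (opX : ops S X) (opY : ops S Y)
  (f : X -> Y) : Prop :=
  forall (i : symb S) (a : 'I_(arity i) -> X), f (opX i a) = opY i (fun j => f (a j)).

Definition is_surj (X Y : Type) (f : X -> Y) : Prop := forall y, exists x, f x = y.

Definition nsurj (S : signature) (m : nat) (opX : ops S 'I_m)
  (A : finType) (opA : ops S A) : nat :=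
  #|[set f : {ffun 'I_m -> A} | decP (is_hom opX opA f /\ is_surj f)]|.

(* c^s_A(n): the maximum of the number of surjective homomorphisms X -> A over
   all algebras X of the signature with at most n elements (every such X is
   isomorphic to one with universe 'I_m, 1 <= m <= n).  The number is bounded
   by (max 1 |A|)^n, so the maximum is taken over N <= (max 1 |A|)^n. *)
Definition cs (S : signature) (A : finType) (opA : ops S A) (n : nat) : nat :=
  \max_(N < ((maxn 1 #|A|) ^ n).+1 |
        decP (exists m, 0 < m <= n /\ exists opX : ops S 'I_m, nsurj opX opA = N)) N.

Inductive term (S : signature) (V : Type) : Type :=
  | Var : V -> term S V
  | App : forall i : symb S, ('I_(arity i) -> term S V) -> term S V.

Fixpoint eval (S : signature) (T : Type) (o : ops S T) (V : Type) (v : V -> T)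
  (t : term S V) : T :=
  match t with
  | Var x => v x
  | App i ts => o i (fun j => eval o v (ts j))
  end.

Definition is_congruence (S : signature) (A : Type) (opA : ops S A)
  (alpha : A -> A -> Prop) : Prop :=
  [/\ (forall a, alpha a a), (forall a b, alpha a b -> alpha b a),
      (forall a b c, alpha a b -> alpha b c -> alpha a c) &
      (forall (i : symb S) (a b : 'I_(arity i) -> A),
          (forall j, alpha (a j) (b j)) -> alpha (opA i a) (opA i b))].

Definition nontrivial_rel (A : Type) (alpha : A -> A -> Prop) : Prop :=
  exists a b, alpha a b /\ a <> b.

(* Strongly abelian: for every k >= 1 (written k.+1, the first variable being
   ord0), every k-ary term operation t, and x, y, z with x_i alpha y_i for all i
   and y_i alpha z_i for i >= 2: t(x) = t(y) implies t(x1,z) = t(y1,z). *)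
Definition strongly_abelian (S : signature) (A : Type) (opA : ops S A)
  (alpha : A -> A -> Prop) : Prop :=
  is_congruence opA alpha /\
  forall (k : nat) (t : term S 'I_k.+1) (x y z : 'I_k.+1 -> A),
    (forall i, alpha (x i) (y i)) ->
    (forall i, i != ord0 -> alpha (y i) (z i)) ->
    eval opA x t = eval opA y t ->
    eval opA (fun i => if i == ord0 then x ord0 else z i) t =
    eval opA (fun i => if i == ord0 then y ord0 else z i) t.

(* Main.v *)
Require Import Defs.
From Stdlib Require Import Reals Lra.
From mathcomp Require Import all_boot.
From Stdlib Require Import FunctionalExtensionality ClassicalEpsilon.
From Stdlib Require Reals.

Set Implicit Arguments.
Unset Strict Implicit.
Unset Printing Implicit Defensive.



Lemma decPT (P : Prop) : P -> Defs.decP P.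
Proof. by rewrite /Defs.decP; case: excluded_middle_informative. Qed.

Lemma decPE (P : Prop) : Defs.decP P -> P.
Proof. by rewrite /Defs.decP; case: excluded_middle_informative. Qed.

Fixpoint tmap (S : signature) (V W : Type) (g : V -> W) (t : term S V) : term S W :=
  match t with
  | Var x => Var S (g x)
  | App i ts => App (fun j => tmap g (ts j))
  end.

Lemma eval_tmap (S : signature) (T : Type) (o : ops S T) (V W : Type)
  (g : V -> W) (v : W -> T) (t : term S V) :
  eval o v (tmap g t) = eval o (fun x => v (g x)) t.
Proof.
elim: t => [x|i ts IH] //=.
by congr (o i); apply: functional_extensionality => j; apply: IH.
Qed.

Lemma SA_core (S : signature) (A : Type) (opA : ops S A) (alpha : A -> A -> Prop)
  (SA : strongly_abelian opA alpha) (V : finType) (t : term S V) (v0 : V)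
  (x y z : V -> A) :
  (forall w, alpha (x w) (y w)) -> (forall w, alpha (y w) (z w)) ->
  eval opA x t = eval opA y t ->
  eval opA (fun w => if w == v0 then x v0 else z w) t =
  eval opA (fun w => if w == v0 then y v0 else z w) t.
Proof.
move=> Hxy Hyz Heq.
case: SA => _ SA.
pose K := #|V|.
pose g := fun w : V => if w == v0 then (ord0 : 'I_K.+1) else lift ord0 (enum_rank w).
pose back := fun (u : V -> A) (r : 'I_K.+1) =>
  match unlift ord0 r with None => u v0 | Some r' => u (enum_val r') end.
have backg : forall u w, back u (g w) = u w.
  move=> u w; rewrite /back /g; case: eqP => [->|_]; first by rewrite unlift_none.
  by rewrite liftK enum_rankK.
have gE : forall w, (g w == ord0) = (w == v0).
  move=> w; rewrite /g; case E: (w == v0); first by rewrite eqxx.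
  by apply/negbTE; rewrite eq_sym; apply: neq_lift.
have := SA K (tmap g t) (back x) (back y) (back z).
rewrite !eval_tmap.
have -> : (fun w => back x (g w)) = x by apply: functional_extensionality => w; apply: backg.
have -> : (fun w => back y (g w)) = y by apply: functional_extensionality => w; apply: backg.
move=> H.
have Hb : forall u1 u2 : V -> A, (forall w, alpha (u1 w) (u2 w)) ->
    forall r, alpha (back u1 r) (back u2 r).
  by move=> u1 u2 Hu r; rewrite /back; case: (unlift ord0 r).
have {H} := H (Hb _ _ Hxy) (fun r _ => Hb _ _ Hyz r) Heq.
have E : forall u : V -> A, (fun w => if g w == ord0 then back u ord0 else back z (g w)) =
   (fun w => if w == v0 then u v0 else z w).
  move=> u; apply: functional_extensionality => w; rewrite gE backg.
  by rewrite /back unlift_none.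
by rewrite E E.
Qed.



Definition rho (A : finType) (a b : A) (m : nat) (s : {ffun 'I_m -> bool})
  (v : A + 'I_m) : A :=
  match v with inl c => c | inr i => if s i then b else a end.

Definition Ft (S : signature) (A : finType) (opA : ops S A) (a b : A) (m : nat)
  (t : term S (A + 'I_m)) : {ffun {ffun 'I_m -> bool} -> A} :=
  [ffun s => eval opA (rho a b s) t].

Definition Xset (S : signature) (A : finType) (opA : ops S A) (a b : A) (m : nat)
  : {set {ffun {ffun 'I_m -> bool} -> A}} :=
  [set F | Defs.decP (exists t, Ft opA a b t = F)].

Lemma inX (S : signature) (A : finType) (opA : ops S A) (a b : A) (m : nat) F :
  (F \in Xset opA a b m) <-> exists t, Ft opA a b t = F.
Proof.
rewrite inE; split; [exact: decPE | exact: decPT].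
Qed.

Definition setf (m : nat) (s : {ffun 'I_m -> bool}) (i : 'I_m) (c : bool)
  : {ffun 'I_m -> bool} := [ffun j => if j == i then c else s j].

Definition Jset (A : finType) (m : nat) (F : {ffun {ffun 'I_m -> bool} -> A})
  : {set 'I_m} := [set i | [exists s, F s != F (setf s i (~~ s i))]].

Lemma setf_same m (s : {ffun 'I_m -> bool}) i : setf s i (s i) = s.
Proof. by apply/ffunP => j; rewrite ffunE; case: eqP => [->|]. Qed.

Lemma notJ (A : finType) m (F : {ffun {ffun 'I_m -> bool} -> A}) i :
  i \notin Jset F -> forall u c, F (setf u i c) = F u.
Proof.
rewrite inE negb_exists => /forallP H u c.
have [->|ne] := eqVneq c (u i); first by rewrite setf_same.
have -> : c = ~~ u i by move: ne; case: c; case: (u i).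
by have := H u; rewrite negbK => /eqP ->.
Qed.

Lemma J_dep (A : finType) m (F : {ffun {ffun 'I_m -> bool} -> A}) (s s' : {ffun 'I_m -> bool}) :
  (forall i, i \in Jset F -> s i = s' i) -> F s = F s'.
Proof.
move=> Hag.
pose ov := fun L : seq 'I_m => [ffun j => if j \in L then s' j else s j].
suff H : forall L, F s = F (ov L).
  have := H (enum 'I_m); congr (F _ = F _); apply/ffunP => j.
  by rewrite ffunE mem_enum.
elim => [|i L IH].
  by congr (fun_of_fin F); apply/ffunP => j; rewrite ffunE.
have -> : ov (i :: L) = setf (ov L) i (s' i).
  apply/ffunP => j; rewrite !ffunE in_cons.
  case E: (j == i) => /=; first by move/eqP: E => ->.
  by rewrite /ov ?ffunE.
case: (boolP (i \in Jset F)) => Hi.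
  have -> : s' i = ov L i by rewrite ffunE; case: (i \in L); rewrite ?Hag.
  by rewrite setf_same.
by rewrite notJ.
Qed.

Lemma rho_setf (A : finType) (a b : A) m (s0 : {ffun 'I_m -> bool}) i c :
  (fun w => if w == inr i then (if c then b else a) else rho a b s0 w) =
  rho a b (setf s0 i c).
Proof.
apply: functional_extensionality => -[c'|j] //=.
rewrite /setf ffunE.
by case: (j =P i) => [->|ne]; [rewrite eqxx | case: eqP => // -[]].
Qed.

Lemma J_inj (S : signature) (A : finType) (opA : ops S A) (alpha : A -> A -> Prop)
  (SA : strongly_abelian opA alpha) (a b : A) (Hab : alpha a b) m
  (t : term S (A + 'I_m)) (s s' : {ffun 'I_m -> bool}) i :
  Ft opA a b t s = Ft opA a b t s' -> i \in Jset (Ft opA a b t) -> s i = s' i.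
Proof.
move=> Heq Hi; apply/eqP/negPn/negP => ne.
move: Hi; rewrite inE => /existsP [s0]; apply/negP; rewrite negbK.
have [[Hr Hs _ _] _] := SA.
have Hal : forall p q : bool, alpha (if p then b else a) (if q then b else a).
  by move=> [] []; auto.
have Hrho : forall u1 u2 : {ffun 'I_m -> bool}, forall w,
    alpha (rho a b u1 w) (rho a b u2 w).
  by move=> u1 u2 [c|j] /=.
have := SA_core (t:=t) SA (inr i) (Hrho s s') (Hrho s' s0).
move: Heq; rewrite !ffunE => Heq /(_ Heq).
rewrite /= rho_setf rho_setf => E.
have [Es|Es] : s i = s0 i /\ s' i = ~~ s0 i \/ s i = ~~ s0 i /\ s' i = s0 i.
  by move: ne; case: (s i); case: (s' i); case: (s0 i); auto.
  by case: Es => E1 E2; move: E; rewrite E1 E2 setf_same => ->.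
by case: Es => E1 E2; move: E; rewrite E1 E2 setf_same => <-.
Qed.

Lemma J_small (S : signature) (A : finType) (opA : ops S A) (alpha : A -> A -> Prop)
  (SA : strongly_abelian opA alpha) (a b : A) (Hab : alpha a b) m F :
  F \in Xset opA a b m -> 2 ^ #|Jset F| <= #|A|.
Proof.
move=> /inX [t <-].
set G := Ft opA a b t.
pose f := fun D : {set 'I_m} => G [ffun i => i \in D].
rewrite -card_powerset -(card_in_imset (f := f)); first exact: max_card.
move=> D D' HD HD' Hf; apply/setP => i.
case: (boolP (i \in Jset G)) => Hi.
  by have := J_inj SA Hab Hf Hi; rewrite !ffunE.
move: HD HD'; rewrite !powersetE => /subsetP HD /subsetP HD'.
case: (boolP (i \in D)) => HiD; first by move: (HD _ HiD); rewrite (negbTE Hi).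
case: (boolP (i \in D')) => HiD' //; by move: (HD' _ HiD'); rewrite (negbTE Hi).
Qed.

Definition eJ (k m : nat) (J : {set 'I_m}) : {ffun 'I_k -> option 'I_m} :=
  [ffun j : 'I_k => nth None [seq Some i | i <- enum J] j].
Definition bOf (k m : nat) (e : {ffun 'I_k -> option 'I_m}) (s : {ffun 'I_m -> bool})
  : {ffun 'I_k -> bool} := [ffun j => if e j is Some i then s i else false].
Definition sOf (k m : nat) (e : {ffun 'I_k -> option 'I_m}) (c : {ffun 'I_k -> bool})
  : {ffun 'I_m -> bool} := [ffun i => [exists j, (e j == Some i) && c j]].
Definition code (A : finType) (k m : nat) (F : {ffun {ffun 'I_m -> bool} -> A}) :=
  (eJ k (Jset F), [ffun c => F (sOf (eJ k (Jset F)) c)]).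

Lemma eJ_cover k m (J : {set 'I_m}) i :
  #|J| <= k -> i \in J -> exists j, eJ k J j = Some i.
Proof.
move=> HJ Hi.
have Hidx : index i (enum J) < k.
  by apply: leq_trans HJ; rewrite cardE index_mem mem_enum.
exists (Ordinal Hidx); rewrite ffunE /=.
rewrite (nth_map i); last by rewrite index_mem mem_enum.
by rewrite nth_index // mem_enum.
Qed.

Lemma sOf_bOf k m (e : {ffun 'I_k -> option 'I_m}) (J : {set 'I_m}) s i :
  (forall i, i \in J -> exists j, e j = Some i) -> i \in J ->
  sOf e (bOf e s) i = s i.
Proof.
move=> Hc Hi; rewrite ffunE.
case: (boolP (s i)) => Hs.
  have [j Hj] := Hc i Hi; apply/existsP; exists j; rewrite Hj eqxx /= ffunE Hj //.
apply/negbTE; rewrite negb_exists; apply/forallP => j.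
rewrite ffunE; case: (e j) => [i'|] //=.
by case: eqP => // -[->]; rewrite (negbTE Hs).
Qed.

Lemma decode (A : finType) k m (F : {ffun {ffun 'I_m -> bool} -> A}) :
  #|Jset F| <= k -> forall s, F s = (code k F).2 (bOf (code k F).1 s).
Proof.
move=> HJ s; rewrite /code /= ffunE; apply: J_dep => i Hi.
by rewrite (sOf_bOf (J := Jset F)) // => i' Hi'; apply: eJ_cover.
Qed.

Lemma card_X (S : signature) (A : finType) (opA : ops S A) (alpha : A -> A -> Prop)
  (SA : strongly_abelian opA alpha) (a b : A) (Hab : alpha a b) m :
  #|Xset opA a b m| <= (m.+1) ^ (trunc_log 2 #|A|) * #|A| ^ (2 ^ trunc_log 2 #|A|).
Proof.
set k := trunc_log 2 #|A|.
have Hk : forall F, F \in Xset opA a b m -> #|Jset F| <= k.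
  by move=> F HF; apply: trunc_log_max => //; exact: (J_small SA Hab HF).
rewrite -(card_in_imset (f := @code A k m)).
  apply: leq_trans (max_card _) _.
  by rewrite card_prod !card_ffun card_option !card_ord card_bool.
move=> F F' HF HF' E; apply/ffunP => s.
by rewrite (decode (Hk _ HF)) (decode (Hk _ HF')) E.
Qed.



Definition opF (S : signature) (A : finType) (opA : ops S A) (m : nat)
  : ops S {ffun {ffun 'I_m -> bool} -> A} :=
  fun i u => [ffun s => opA i (fun j => u j s)].

Lemma X_closed (S : signature) (A : finType) (opA : ops S A) (a b : A) m i
  (u : 'I_(arity i) -> {ffun {ffun 'I_m -> bool} -> A}) :
  (forall j, u j \in Xset opA a b m) -> @opF S A opA m i u \in Xset opA a b m.
Proof.
move=> Hu.
have H : forall j, exists t, Ft opA a b t = u j by move=> j; apply/inX.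
pose ts := fun j => proj1_sig (constructive_indefinite_description _ (H j)).
have Hts : forall j, Ft opA a b (ts j) = u j.
  by move=> j; rewrite /ts; case: constructive_indefinite_description.
apply/inX; exists (App ts); apply/ffunP => s; rewrite !ffunE /=.
congr (opA i); apply: functional_extensionality => j.
by rewrite -Hts ffunE.
Qed.

Lemma X_var (S : signature) (A : finType) (opA : ops S A) (a b : A) m v :
  Ft opA a b (Var S v) \in Xset opA a b m.
Proof. by apply/inX; exists (Var S v). Qed.

Lemma nsurj_big (S : signature) (A : finType) (opA : ops S A) (a b : A) (ab : a != b) m :
  let X := Xset opA a b m in
  exists opX : ops S 'I_#|X|, 2 ^ m <= nsurj opX opA.
Proof.
move=> X.
have HF0 : Ft opA a b (Var S (inl a)) \in X by apply: X_var.
pose opX : ops S 'I_#|X| :=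
  fun i r => enum_rank_in HF0 (@opF S A opA m i (fun j => enum_val (r j))).
exists opX.
pose homS := fun S0 : {ffun 'I_m -> bool} =>
  [ffun r : 'I_#|X| => (enum_val r : {ffun {ffun 'I_m -> bool} -> A}) S0].
have Hinj : injective homS.
  move=> S0 S1 E; apply/ffunP => i.
  have := congr1 (fun f : {ffun 'I_#|X| -> A} => f (enum_rank_in HF0 (Ft opA a b (Var S (inr i))))) E.
  rewrite /= !ffunE enum_rankK_in ?X_var // !ffunE /=.
  by case: (S0 i); case: (S1 i) => //= E'; move: ab; rewrite ?E' eqxx.
rewrite /nsurj.
have -> : 2 ^ m = #|[set homS S0 | S0 in [set: {ffun 'I_m -> bool}]]|.
  by rewrite card_imset // cardsT card_ffun card_bool card_ord.
apply: subset_leq_card; apply/subsetP => f /imsetP [S0 _ ->].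
rewrite inE; apply: decPT; split.
  move=> i r; rewrite !ffunE /opX enum_rankK_in; last by apply: X_closed => j; apply: enum_valP.
  by rewrite /opF ffunE; congr (opA i); apply: functional_extensionality => j; rewrite ffunE.
move=> y; exists (enum_rank_in HF0 (Ft opA a b (Var S (inl y)))).
by rewrite ffunE enum_rankK_in ?X_var // ffunE.
Qed.

Lemma cs_big (S : signature) (A : finType) (opA : ops S A) (alpha : A -> A -> Prop)
  (SA : strongly_abelian opA alpha) (a b : A) (Hab : alpha a b) (ab : a != b) m n :
  (m.+1) ^ (trunc_log 2 #|A|) * #|A| ^ (2 ^ trunc_log 2 #|A|) <= n ->
  2 ^ m <= cs opA n.
Proof.
move=> Hn.
have [opX Hm] := nsurj_big opA ab m.
set X := Xset opA a b m in opX Hm.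
have HN : #|X| <= n := leq_trans (card_X SA Hab m) Hn.
have HN0 : 0 < #|X|.
  by apply/card_gt0P; exists (Ft opA a b (Var S (inl a))); apply: X_var.
have HA : 0 < #|A| by apply/card_gt0P; exists a.
have Hb : nsurj opX opA < ((maxn 1 #|A|) ^ n).+1.
  rewrite ltnS /nsurj (maxn_idPr HA).
  apply: leq_trans (max_card _) _.
  by rewrite card_ffun card_ord; apply: leq_pexp2l.
apply: leq_trans Hm _.
rewrite /cs.
apply: (leq_bigmax_cond (F := fun N : 'I_((maxn 1 #|A|) ^ n).+1 => nat_of_ord N) (Ordinal Hb)).
apply: decPT; exists #|X|; split; first by rewrite HN0 HN.
by exists opX.
Qed.



Lemma find_m C k n : 0 < C -> 0 < k -> C <= n ->
  exists m, C * m.+1 ^ k <= n < C * m.+2 ^ k.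
Proof.
move=> HC Hk Hn.
have exP : exists j, n < C * j.+2 ^ k.
  exists n; apply: (@leq_trans (n.+2)); first exact: leqnSn.
  apply: (@leq_trans (n.+2 ^ k)).
    by move: (leq_pexp2l (isT : 0 < n.+2) Hk); rewrite expn1.
  exact: leq_pmull.
case: (ex_minnP exP) => m0 Pm0 Hmin.
case: m0 Pm0 Hmin => [|j] Pj Hmin.
  by exists 0; rewrite exp1n muln1 Hn.
exists j.+1; rewrite Pj andbT.
by rewrite leqNgt; apply/negP => /Hmin; rewrite ltnn.
Qed.


Local Open Scope R_scope.

Lemma INR_pos (p : nat) : (0 < p)%N -> 0 < INR p.
Proof. by move=> H; apply: lt_0_INR; apply/ltP. Qed.

Lemma INR_leq (p q : nat) : (p <= q)%N -> INR p <= INR q.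
Proof. by move=> H; apply: le_INR; apply/leP. Qed.

Lemma INR_muln (p q : nat) : INR (muln p q) = INR p * INR q.
Proof. by rewrite mulnE mult_INR. Qed.

Lemma INR_expn (p q : nat) : INR (expn p q) = INR p ^ q.
Proof.
elim: q => [|q IH]; first by rewrite expn0.
by rewrite expnS INR_muln IH.
Qed.

Lemma pow2_le (m p : nat) : (2 ^ m <= p)%N -> Rpower (INR 2) (INR m) <= INR p.
Proof.
move=> H; rewrite Rpower_pow; last by rewrite /=; lra.
by rewrite -INR_expn; apply: INR_leq.
Qed.

Lemma real_part (C k m n : nat) : (0 < C)%N -> (0 < k)%N -> (0 < n)%N -> (0 < m)%N ->
  (n <= expn (muln C m.+2) k)%N ->
  Rpower (INR 2) (Rinv (INR (muln 3 C)) * Rpower (INR n) (Rinv (INR k)))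
  <= Rpower (INR 2) (INR m).
Proof.
move=> HC Hk Hn Hm H3.
have HCR : 1 <= INR C by apply: (INR_leq (p := 1)).
have Hk0 := INR_pos Hk.
have Hn0 := INR_pos Hn.
have Hm1R : 1 <= INR m by apply: (INR_leq (p := 1)).
pose y := INR (muln C m.+2).
have Hy : y = INR C * (INR m + 2) by rewrite /y INR_muln !S_INR; lra.
have Hy0 : 0 < y by rewrite Hy; nra.
have Hroot : Rpower (INR n) (Rinv (INR k)) <= y.
  have Hle : INR n <= y ^ k by rewrite /y -INR_expn; apply: INR_leq.
  rewrite -Rpower_pow // in Hle.
  have := Rle_Rpower_l (INR n) (Rpower y (INR k)) (Rinv (INR k)) (Rlt_le _ _ (Rinv_0_lt_compat _ Hk0)) (conj Hn0 Hle).
  by rewrite Rpower_mult Rinv_r ?Rpower_1 //; apply: Rgt_not_eq.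
apply: Rle_Rpower; first by rewrite /=; lra.
have E3 : INR (muln 3 C) = 3 * INR C by rewrite INR_muln /=; lra.
rewrite E3.
have Hc0 : 0 < Rinv (3 * INR C) by apply: Rinv_0_lt_compat; lra.
apply: (Rle_trans _ (Rinv (3 * INR C) * y)).
  by apply: Rmult_le_compat_l => //; apply: Rlt_le.
rewrite Hy.
have -> : Rinv (3 * INR C) * (INR C * (INR m + 2)) = (INR m + 2) / 3.
  by field; lra.
lra.
Qed.

Local Close Scope R_scope.

Theorem corollary3p5 (S : signature) (A : finType) (opA : ops S A) :
  (exists alpha : A -> A -> Prop,
      strongly_abelian opA alpha /\ nontrivial_rel alpha) ->
  let k := trunc_log 2 #|A| in
  exists (c : Reals.Rdefinitions.R) (N0 : nat),
    Reals.Rdefinitions.Rlt Reals.Rdefinitions.R0 c /\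
    forall n : nat, N0 <= n ->
      Reals.Rdefinitions.Rle
        (Reals.Rpower.Rpower (Reals.Raxioms.INR 2)
           (Reals.Rdefinitions.Rmult c
              (Reals.Rpower.Rpower (Reals.Raxioms.INR n)
                 (Reals.Rdefinitions.Rinv (Reals.Raxioms.INR k)))))
        (Reals.Raxioms.INR (cs opA n)).
Proof.
move=> [alpha [SA [a [b [Hab ne]]]]] k.
have ab : a != b by apply/eqP.
have HA2 : 1 < #|A|.
  by apply/card_gt1P; exists a, b.
have Hk : 0 < k by rewrite /k trunc_log_gt0 HA2.
pose C := #|A| ^ (2 ^ k).
have HC : 0 < C by rewrite expn_gt0 (ltn_trans _ HA2).
exists (Rinv (INR (muln 3 C))), (C * 2 ^ k); split.
  by apply: Rinv_0_lt_compat; apply: INR_pos; rewrite muln_gt0 HC.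
move=> n Hn.
have HCn : C <= n by apply: leq_trans Hn; apply: leq_pmulr; rewrite expn_gt0.
have [m /andP [H1 H2]] := find_m HC Hk HCn.
have Hm1 : 0 < m.
  by rewrite lt0n; apply/eqP => E; move: H2; rewrite E ltnNge Hn.
have Hcs : 2 ^ m <= cs opA n.
  by apply: (cs_big SA Hab ab); rewrite mulnC.
have H3 : n <= (C * m.+2) ^ k.
  rewrite expnMn; apply: leq_trans (ltnW H2) _; rewrite leq_mul2r.
  by apply/orP; right; move: (leq_pexp2l HC Hk); rewrite expn1.
apply: Rle_trans (real_part HC Hk (leq_trans HC HCn) Hm1 H3) (pow2_le Hcs).
Qed.
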